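(* Let $I$ be a finite set and $T$ a tree on $I$. The map $\Pi$ sending a forest $F = T_1 \sqcup \dots \sqcup T_k$ in the interval $[\hat{0},T]$ of $\operatorname{For}(I)$ to the partition $(\mathcal{L}(T_1),\dots,\mathcal{L}(T_k))$ of $I$ is an isomorphism of posets from $([\hat{0},T],\leq)$ onto $(\operatorname{Ad}(T),\leq_r)$.
   Context: A tree on a finite set $I$ is a (non-planar) rooted binary tree whose leaves are bijectively labeled by $I$: vertices are inner vertices (valence $3$) and leaves and the root (valence $1$), edges oriented towards the root; one-leaf trees are allowed. A forest on $I$ is a set of trees whose leaf sets partition $I$. For forests $F,G$ on $I$, $F \leq G$ if there is a continuous map $F\to G$ which (D1) is increasing with respect to orientation towards the root, (D2) maps inner vertices to inner vertices injectively, (D3) is the identity of $I$ on leaves, (D4) is injective on each tree of $F$. This gives the poset $\operatorname{For}(I)$, whose minimum $\hat{0}$ is the forest without inner vertices. $\mathcal{L}(S)$ denotes the leaf set of a tree $S$. For distinct leaves $i,j$ of $T$, $v_{(i,j)}$ denotes the inner vertex of $T$ at which the paths from $i$ and from $j$ down to the root meet. For $J \subseteq I$, $\mathcal{S}(J) = \{v_{(i,j)} : i,j \in J, i \neq j\}$. A partition $(\pi_1,\dots,\pi_k)$ of $I$ is $T$-admissible if $\mathcal{S}(\pi_i)\cap\mathcal{S}(\pi_j)=\emptyset$ for all $i\neq j$; $\operatorname{Ad}(T)$ is the set of $T$-admissible partitions, ordered by refinement $\leq_r$ (each block of the smaller partition is contained in a block of the larger). *)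

(* Defs.v *)
From mathcomp Require Import all_boot.
Set Implicit Arguments. Unset Strict Implicit. Unset Printing Implicit Defensive.

Section Forests.
Variable I : finType.

(* A forest on I is encoded by its set of clusters: the leaf sets of the
   subtrees hanging at its leaves and inner vertices.  Leaves <-> singletons,
   inner vertices <-> clusters with >= 2 elements, trees <-> maximal clusters. *)
Definition is_forest (H : {set {set I}}) : Prop :=
  [/\ forall i : I, [set i] \in H,
      set0 \notin H,
      (forall C D, C \in H -> D \in H ->
         [\/ C \subset D, D \subset C | [disjoint C & D]]) &
      (forall C, C \in H -> 1 < #|C| ->
         exists A B, A \in H /\ B \in H /\ A \proper C /\ B \proper C /\
                        [disjoint A & B] /\ A :|: B = C /\
                        (forall D, D \in H -> D \proper C ->
                          D \subset A \/ D \subset B))].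

Definition trees (H : {set {set I}}) : {set {set I}} :=
  [set C in H | [forall D in H, (C \subset D) ==> (D == C)]].

Definition is_tree_on (T : {set {set I}}) : Prop :=
  is_forest T /\ [set: I] \in T.

Definition zero_forest : {set {set I}} := [set [set i] | i : I].

(* Vertices of the topological realization: (C, false) is the vertex (leaf or
   inner) with cluster C; (R, true) is the root of the tree with leaf set R. *)
Definition vtx := ({set I} * bool)%type.

Definition vert (H : {set {set I}}) (v : vtx) : bool :=
  if v.2 then v.1 \in trees H else v.1 \in H.

Definition inner (H : {set {set I}}) (v : vtx) : bool :=
  vert H v && ~~ v.2 && (1 < #|v.1|).

(* [below H u v]: v lies on the path from u down to the root (u <= v) *)
Definition below (H : {set {set I}}) (u v : vtx) : bool :=
  vert H u && vert H v &&
  (if u.2 then v.2 && (u.1 == v.1) else u.1 \subset v.1).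

Definition edge (H : {set {set I}}) (u v : vtx) : bool :=
  below H u v && (u != v) &&
  [forall w : vtx, (below H u w && below H w v) ==> ((w == u) || (w == v))].

Definition pathv (H : {set {set I}}) (x y : vtx) : {set vtx} :=
  [set w | below H x w && below H w y].

Definition in_tree (H : {set {set I}}) (R : {set I}) (v : vtx) : bool :=
  vert H v && below H v (R, true).

(* F <= G in For(I): existence of a continuous map F -> G with (D1)-(D4),
   encoded on the cells of the realizations: phi sends vertices to vertices
   and each edge (u,v) homeomorphically onto the monotone path from phi u
   to phi v. *)
Definition forLe (F G : {set {set I}}) : Prop :=
  is_forest F /\ is_forest G /\
  exists phi : vtx -> vtx,
  (forall v, vert F v -> vert G (phi v)) /\
      (forall u v, edge F u v -> below G (phi u) (phi v)) /\
      (forall v, inner F v -> inner G (phi v)) /\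
      (forall u v, inner F u -> inner F v -> phi u = phi v -> u = v) /\
      (forall i : I, phi ([set i], false) = ([set i], false)) /\
      (* (D4) injective on each tree of F *)
      forall R, R \in trees F ->
        [/\ (forall u v, in_tree F R u -> in_tree F R v -> phi u = phi v -> u = v),
            (forall w u v, in_tree F R w -> in_tree F R u -> edge F u v ->
               w != u -> w != v -> phi w \notin pathv G (phi u) (phi v)) &
            (forall u1 v1 u2 v2, in_tree F R u1 -> in_tree F R u2 ->
               edge F u1 v1 -> edge F u2 v2 -> (u1, v1) != (u2, v2) ->
               pathv G (phi u1) (phi v1) :&: pathv G (phi u2) (phi v2)
                 \subset phi @: ([set u1; v1] :&: [set u2; v2]))].

Definition in_interval (T F : {set {set I}}) : Prop :=
  forLe zero_forest F /\ forLe F T.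

Definition is_meet (T : {set {set I}}) (i j : I) (C : {set I}) : bool :=
  [&& C \in T, i \in C, j \in C &
      [forall D in T, ((i \in D) && (j \in D)) ==> (C \subset D)]].

Definition Sset (T : {set {set I}}) (J : {set I}) : {set {set I}} :=
  [set C | [exists i in J, exists j in J, (i != j) && is_meet T i j C]].

Definition admissible (T : {set {set I}}) (P : {set {set I}}) : Prop :=
  partition P [set: I] /\
  forall A B, A \in P -> B \in P -> A != B -> Sset T A :&: Sset T B = set0.

Definition refines (P Q : {set {set I}}) : Prop :=
  forall A, A \in P -> exists2 B, B \in Q & A \subset B.

Definition Pi (F : {set {set I}}) : {set {set I}} := trees F.

End Forests.

(* Main.v *)
Require Import Defs.
From mathcomp Require Import all_boot.
Set Implicit Arguments. Unset Strict Implicit. Unset Printing Implicit Defensive.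

Section Basics.
Variable I : finType.
Implicit Types (G F H T P Q : {set {set I}}) (S C D X : {set I}).

Definition mG G S : {set I} := \bigcap_(D in G | S \subset D) D.

Lemma mG_min G S D : D \in G -> S \subset D -> mG G S \subset D.
Proof. by move=> DG SD; apply: (bigcap_inf D); rewrite DG SD. Qed.

Lemma sub_mG G S : S \subset mG G S.
Proof. by apply/bigcapsP => D /andP[]. Qed.

Lemma mG_mono G S S' : S \subset S' -> mG G S \subset mG G S'.
Proof.
move=> SS'; apply/bigcapsP => D /andP[DG S'D].
exact: mG_min DG (subset_trans SS' S'D).
Qed.

Lemma forest_lam H C D : is_forest H -> C \in H -> D \in H ->
  C :&: D != set0 -> C \subset D \/ D \subset C.
Proof.
case=> _ _ Hl _ CH DH n0; case: (Hl C D CH DH) => h; [by left|by right|].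
by rewrite (disjoint_setI0 h) eqxx in n0.
Qed.

Lemma nonempty_of (A : {set I}) x : x \in A -> A != set0.
Proof. by move=> xA; apply/set0Pn; exists x. Qed.

Lemma mG_in H S D : is_forest H -> S != set0 -> D \in H -> S \subset D ->
  mG H S \in H.
Proof.
move=> Hf S0 DH SD.
have P0 : (fun X => (X \in H) && (S \subset X)) D by rewrite /= DH SD.
case: (@arg_minnP _ D (fun X => (X \in H) && (S \subset X)) (fun X : {set I} => #|X|) P0) => M /andP[MH SM] Mmin.
suff -> : mG H S = M by [].
apply/eqP; rewrite eqEsubset mG_min //=.
apply/bigcapsP => E /andP[EH SE].
case/set0Pn: S0 => x xS.
have : M :&: E != set0 by apply: (@nonempty_of _ x); rewrite inE (subsetP SM) ?(subsetP SE).
case/(forest_lam Hf MH EH) => // EM.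
have := Mmin E; rewrite EH SE => /(_ isT) cME.
have /eqP -> // : E == M by rewrite eqEcard EM cME.
Qed.

Lemma mG_unique H S M : M \in H -> S \subset M ->
  (forall D, D \in H -> S \subset D -> M \subset D) -> mG H S = M.
Proof.
move=> MH SM Mmin; apply/eqP; rewrite eqEsubset mG_min //=.
by apply/bigcapsP => E /andP[EH SE]; apply: Mmin.
Qed.

Lemma mG1 H i : [set i] \in H -> mG H [set i] = [set i].
Proof. by move=> iH; apply: mG_unique. Qed.

Definition children H C A B :=
  [/\ A \in H, B \in H, A \proper C & B \proper C] /\ [/\ [disjoint A & B], A :|: B = C &
      (forall D, D \in H -> D \proper C -> D \subset A \/ D \subset B)].

Lemma childrenC H C A B : children H C A B -> children H C B A.
Proof.
case=> [[? ? ? ?] [d u m]]; split; split => //; first by rewrite disjoint_sym.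
  by rewrite setUC.
by move=> D DH DC; case: (m D DH DC); [right|left].
Qed.

Lemma children_ex H C : is_forest H -> C \in H -> 1 < #|C| ->
  exists A B, children H C A B.
Proof.
case=> _ _ _ Hb CH c2; case: (Hb C CH c2) => A [B [? [? [? [? [? [? ?]]]]]]].
by exists A, B; split; split.
Qed.

Lemma forest_ne H C : is_forest H -> C \in H -> C != set0.
Proof. by case=> _ H0 _ _ CH; apply: contraNneq H0 => <-. Qed.

Lemma mG_pair H S D : is_forest H -> 1 < #|S| -> D \in H -> S \subset D ->
  exists i j, [/\ i \in S, j \in S, i != j & mG H [set i; j] = mG H S].
Proof.
move=> Hf S2 DH SD.
have S0 : S != set0 by rewrite -card_gt0 (ltn_trans _ S2).
have MH := mG_in Hf S0 DH SD.
have SM := sub_mG H S.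
have M2 : 1 < #|mG H S| by apply: leq_trans S2 (subset_leq_card SM).
case: (children_ex Hf MH M2) => A [B [[AH BH AM BM] [dAB uAB mAB]]].
have nSA : ~~ (S \subset A).
  apply/negP => SA; have := mG_min AH SA.
  by move/proper_sub_trans: AM => h /h; rewrite properxx.
have nSB : ~~ (S \subset B).
  apply/negP => SB; have := mG_min BH SB.
  by move/proper_sub_trans: BM => h /h; rewrite properxx.
case/subsetPn: nSA => j jS jA.
case/subsetPn: nSB => i iS iB.
have jB : j \in B.
  by have := subsetP SM j jS; rewrite -uAB inE (negbTE jA).
have iA : i \in A.
  by have := subsetP SM i iS; rewrite -uAB inE (negbTE iB) orbF.
have ij : i != j by apply: contraNneq jA => <-.
exists i, j; split => //.
have ijS : [set i; j] \subset S by apply/subsetP => x; rewrite !inE => /orP[]/eqP->.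
have ij0 : [set i; j] != set0 by apply: (@nonempty_of _ i); rewrite !inE eqxx.
have NH := mG_in Hf ij0 DH (subset_trans ijS SD).
have NM := mG_mono H ijS.
have iN : i \in mG H [set i; j] by rewrite (subsetP (sub_mG H _)) // !inE eqxx.
have jN : j \in mG H [set i; j] by rewrite (subsetP (sub_mG H _)) // !inE eqxx orbT.
apply/eqP; apply: contraT => neq.
have pr : mG H [set i; j] \proper mG H S by rewrite properEneq neq NM.
case: (mAB _ NH pr) => /subsetP h.
  by have := h j jN; rewrite (negbTE jA).
by have := h i iN; rewrite (negbTE iB).
Qed.

End Basics.


Section Trees.
Variable I : finType.
Implicit Types (G F H T P Q : {set {set I}}) (S C D X L R : {set I}).

Lemma trees_sub H : trees H \subset H.
Proof. by apply/subsetP => C; rewrite inE => /andP[]. Qed.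

Lemma treesP H R : reflect (R \in H /\ forall D, D \in H -> R \subset D -> D = R)
  (R \in trees H).
Proof.
rewrite inE; apply: (iffP andP) => [[RH /forall_inP h]|[RH h]]; split => //.
  by move=> D DH RD; apply/eqP; apply: (implyP (h D DH)).
by apply/forall_inP => D DH; apply/implyP => RD; rewrite (h D DH RD).
Qed.

Lemma in_trees H C : C \in H -> exists2 R, R \in trees H & C \subset R.
Proof.
move=> CH.
have P0 : (fun X => (X \in H) && (C \subset X)) C by rewrite /= CH subxx.
case: (@arg_maxnP _ C (fun X => (X \in H) && (C \subset X)) (fun X : {set I} => #|X|) P0)
  => M /andP[MH CM] Mmax.
exists M => //; apply/treesP; split => // D DH MD.
have := Mmax D; rewrite DH (subset_trans CM MD) => /(_ isT) cDM.
by apply/eqP; rewrite eq_sym eqEcard MD /=; exact: cDM.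
Qed.

Lemma trees_eq H R1 R2 x : is_forest H -> R1 \in trees H -> R2 \in trees H ->
  x \in R1 -> x \in R2 -> R1 = R2.
Proof.
move=> Hf /treesP[R1H m1] /treesP[R2H m2] x1 x2.
have : R1 :&: R2 != set0 by apply: (@nonempty_of _ _ x); rewrite inE x1 x2.
by case/(forest_lam Hf R1H R2H) => h; [rewrite (m1 _ R2H h)|rewrite (m2 _ R1H h)].
Qed.

Lemma partP P : reflect
  [/\ forall i, exists2 L, L \in P & i \in L,
      forall L1 L2 i, L1 \in P -> L2 \in P -> i \in L1 -> i \in L2 -> L1 = L2 &
      set0 \notin P] (partition P [set: I]).
Proof.
apply: (iffP and3P) => [[/eqP cov /trivIsetP tr n0]|[cov tr n0]]; split => //.
- move=> i; have : i \in cover P by rewrite cov inE.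
  by case/bigcupP => L LP iL; exists L.
- move=> L1 L2 i L1P L2P i1 i2; apply/eqP; apply: contraT => ne.
  have := tr L1 L2 L1P L2P ne; rewrite -setI_eq0 => /eqP e.
  have : i \in L1 :&: L2 by rewrite inE i1 i2.
  by rewrite e inE.
- apply/eqP/setP => i; rewrite inE; case: (cov i) => L LP iL.
  by apply/bigcupP; exists L.
- apply/trivIsetP => L1 L2 L1P L2P ne; rewrite -setI_eq0; apply/set0Pn => -[i].
  by rewrite inE => /andP[i1 i2]; rewrite (tr L1 L2 i L1P L2P i1 i2) eqxx in ne.
Qed.

Lemma trees_part H : is_forest H -> partition (trees H) [set: I].
Proof.
move=> Hf; apply/partP; split.
- move=> i; have := Hf; case=> h _ _ _.
  case: (in_trees (h i)) => R RT iR; exists R => //.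
  by rewrite (subsetP iR) ?inE.
- by move=> L1 L2 i L1P L2P; apply: (trees_eq Hf).
- apply: contraT => /negbNE /treesP[H0 _].
  by case: Hf => _ h _ _; rewrite H0 in h.
Qed.

Definition fits G P := forall L, L \in P -> exists2 D, D \in G & L \subset D.

Definition tG G S : {set I} := odflt setT [pick R in trees G | S \subset R].

Lemma tG_spec G S D : D \in G -> S \subset D -> tG G S \in trees G /\ S \subset tG G S.
Proof.
move=> DG SD; rewrite /tG; case: pickP => [R /andP[] //|no].
case: (in_trees DG) => R RT DR.
by have := no R; rewrite RT (subset_trans SD DR).
Qed.

Definition restr G P : {set {set I}} :=
  [set X | [exists D in G, exists L in P, X == D :&: L] && (X != set0)].

Lemma restrP G P X : reflect (exists D L, [/\ D \in G, L \in P, X = D :&: L & X != set0])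
  (X \in restr G P).
Proof.
rewrite inE; apply: (iffP andP) => [[/exists_inP[D DG /exists_inP[L LP /eqP e]] n0]|].
  by exists D, L.
by case=> D [L [DG LP e n0]]; split => //; apply/exists_inP; exists D => //;
  apply/exists_inP; exists L => //; apply/eqP.
Qed.

Lemma restr_in G P D L : D \in G -> L \in P -> D :&: L != set0 -> D :&: L \in restr G P.
Proof. by move=> DG LP n0; apply/restrP; exists D, L. Qed.

Section Restr.
Variables (G P : {set {set I}}).
Hypotheses (Gf : is_forest G) (Pp : partition P [set: I]) (Pfit : fits G P).
Let F := restr G P.

Lemma part_same L1 L2 S : L1 \in P -> L2 \in P -> S != set0 -> S \subset L1 -> S \subset L2 -> L1 = L2.
Proof.
case/partP: Pp => _ tr _ L1P L2P /set0Pn[x xS] S1 S2.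
exact: (tr L1 L2 x L1P L2P (subsetP S1 x xS) (subsetP S2 x xS)).
Qed.

Lemma restr_block X : X \in F -> exists2 L, L \in P & X \subset L.
Proof. by case/restrP => D [L [_ LP -> _]]; exists L => //; apply: subsetIr. Qed.

Lemma restr_blockE X L : X \in F -> L \in P -> X \subset L -> X = mG G X :&: L.
Proof.
case/restrP => D [L' [DG L'P eX n0]] LP XL.
have XL' : X \subset L' by rewrite eX subsetIr.
have e := part_same LP L'P n0 XL XL'; subst L'.
apply/eqP; rewrite eqEsubset subsetI sub_mG XL /=.
by rewrite {2}eX setSI // mG_min // eX subsetIl.
Qed.

Lemma restr_inter X L : X \in F -> L \in P -> X :&: L != set0 -> X \subset L.
Proof.
move=> XF LP n0; case: (restr_block XF) => L' L'P XL'.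
have := part_same LP L'P n0 (subsetIr X L) (subset_trans (subsetIl X L) XL').
by move=> ->.
Qed.

Lemma restr_mG_in X : X \in F -> mG G X \in G.
Proof.
case/restrP => D [L [DG LP eX n0]].
by apply: (mG_in Gf n0 DG); rewrite eX subsetIl.
Qed.

Lemma restr_forest : is_forest F.
Proof.
have [cov tr n0] := partP _ Pp.
split.
- move=> i; case: (cov i) => L LP iL.
  have [h _ _ _] := Gf.
  have -> : [set i] = [set i] :&: L by apply/setP => x; rewrite !inE; case: eqP => // ->.
  apply: restr_in => //; apply: (@nonempty_of _ _ i); by rewrite !inE eqxx iL.
- apply/negP; case/restrP => D0 [L0 [_ _ _ H0]]; by rewrite eqxx in H0.
- move=> X1 X2 /restrP[D1 [L1 [D1G L1P e1 n1]]] /restrP[D2 [L2 [D2G L2P e2 n2]]].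
  case: (L1 =P L2) => [eL|neL].
    subst L2 X1 X2.
    have [_ _ Hl _] := Gf.
    case: (Hl D1 D2 D1G D2G) => h.
    + by constructor 1; apply: setSI.
    + by constructor 2; apply: setSI.
    + constructor 3; apply: (disjointWl (subsetIl D1 L1)).
      exact: (disjointWr (subsetIl D2 L1)).
  constructor 3; rewrite e1 e2; apply: (disjointWl (subsetIr D1 L1)).
  apply: (disjointWr (subsetIr D2 L2)).
  have := partP _ Pp; case=> _ _ _.
  have [_ /trivIsetP tr' _] := and3P Pp.
  exact: tr' L1 L2 L1P L2P (introN eqP neL).
- move=> X XF X2.
  case: (restr_block XF) => L LP XL.
  have eX := restr_blockE XF LP XL.
  have MG := restr_mG_in XF.
  set M := mG G X in eX MG.
  have M2 : 1 < #|M| by apply: leq_trans X2 (subset_leq_card (sub_mG G X)).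
  case: (children_ex Gf MG M2) => A [B [[AH BH AM BM] [dAB uAB mAB]]].
  have nXA : ~~ (X \subset A).
    apply/negP => SA; have := mG_min AH SA.
    by move/proper_sub_trans: AM => h /h; rewrite properxx.
  have nXB : ~~ (X \subset B).
    apply/negP => SB; have := mG_min BH SB.
    by move/proper_sub_trans: BM => h /h; rewrite properxx.
  have XAB : X = (A :&: L) :|: (B :&: L) by rewrite -setIUl uAB.
  exists (A :&: L), (B :&: L).
  have An : A :&: L != set0.
    apply: contra nXB => /eqP A0; apply/subsetP => x xX.
    move: xX; rewrite {1}XAB A0 set0U; by case/setIP.
  have Bn : B :&: L != set0.
    apply: contra nXA => /eqP B0; apply/subsetP => x xX.
    move: xX; rewrite {1}XAB B0 setU0; by case/setIP.
  split; first exact: restr_in.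
  split; first exact: restr_in.
  split.
    rewrite properEneq XAB subsetUl andbT; apply/eqP => e.
    by move: nXA; rewrite XAB -e subsetIl.
  split.
    rewrite properEneq XAB subsetUr andbT; apply/eqP => e.
    by move: nXB; rewrite XAB -e subsetIl.
  split.
    apply: (disjointWl (subsetIl A L)).
    exact: (disjointWr (subsetIl B L)).
  split; first by rewrite -XAB.
  move=> E EF EX.
  case/restrP: EF => D [L' [DG L'P eE En]].
  have EL : E \subset L by apply: subset_trans (proper_sub EX) XL.
  have EL' : E \subset L' by rewrite eE subsetIr.
  have eL := part_same LP L'P En EL EL'; subst L'.
  have DM : D :&: M != set0.
    apply: contra En => /eqP h; apply/eqP/setP => x; rewrite eE !inE.
    apply/negP => /andP[xD xL].
    have xX : x \in X by apply: (subsetP (proper_sub EX)); rewrite eE inE xD xL.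
    have xM : x \in M by apply: (subsetP (sub_mG G X)).
    by move/setP: h => /(_ x); rewrite !inE xD xM.
  case: (forest_lam Gf DG MG DM) => [DM'|MD].
    case: (D =P M) => [eDM|neDM].
      by move: EX; rewrite eE eDM -eX properxx.
    have pDM : D \proper M by rewrite properEneq DM' andbT; apply/eqP.
    case: (mAB D DG pDM) => h; [left|right]; rewrite eE; exact: setSI.
  have : X \subset E by rewrite eX eE setSI.
  by move=> XE; move: (proper_sub_trans EX XE); rewrite properxx.
Qed.

Lemma restr_trees : trees F = P.
Proof.
have [cov tr n0] := partP _ Pp.
have RF : forall R, R \in P -> R \in F.
  move=> R RP; case: (Pfit RP) => D DG RD.
  have [tT tR] := tG_spec DG RD.
  have -> : R = tG G R :&: R by rewrite (setIidPr tR).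
  apply: restr_in => //; first by apply: (subsetP (trees_sub G)).
  rewrite (setIidPr tR); apply: contraNneq n0 => <-; exact: RP.
apply/setP => R; apply/idP/idP.
  case/treesP => RF' Rmax.
  case: (restr_block RF') => L LP RL.
  by rewrite -(Rmax L (RF L LP) RL).
move=> RP; apply/treesP; split; first exact: RF.
move=> D DF RD; apply/eqP; rewrite eqEsubset RD andbT.
apply: restr_inter => //.
rewrite (setIidPr RD); apply: contraNneq n0 => <-; exact: RP.
Qed.

Lemma restr_mG S L : S != set0 -> L \in P -> S \subset L -> mG F S = mG G S :&: L.
Proof.
move=> S0 LP SL; case: (Pfit LP) => D0 D0G LD0.
have MG := mG_in Gf S0 D0G (subset_trans SL LD0).
apply: mG_unique.
- apply: restr_in => //; case/set0Pn: S0 => x xS.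
  by apply: (@nonempty_of _ _ x); rewrite inE (subsetP (sub_mG G S)) ?(subsetP SL).
- by rewrite subsetI sub_mG SL.
- move=> X XF SX; case/restrP: XF => D [L' [DG L'P eX n0]].
  have SL' : S \subset L' by rewrite eX in SX; apply: subset_trans SX (subsetIr _ _).
  have eL := part_same LP L'P S0 SL SL'; subst L'.
  rewrite eX setSI // mG_min //.
  by apply: subset_trans SX _; rewrite eX subsetIl.
Qed.

End Restr.
End Trees.


Section Edges.
Variable I : finType.
Implicit Types (G F H T P Q : {set {set I}}) (S C D X L R W : {set I}).

Lemma below_ff H C D : below H (C,false) (D,false) = [&& C \in H, D \in H & C \subset D].
Proof. by rewrite /below /vert /= andbA. Qed.

Lemma below_ft H C R : below H (C,false) (R,true) = [&& C \in H, R \in trees H & C \subset R].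
Proof. by rewrite /below /vert /= andbA. Qed.

Lemma below_t H R v : below H (R,true) v -> v = (R,true).
Proof.
case: v => V b; rewrite /below /vert /=; case: b => /=; last by rewrite andbF.
by case/andP => _ /eqP ->.
Qed.

Lemma below_xf H u D : below H u (D,false) -> u.2 = false.
Proof. by case: u => U [] //; rewrite /below /= andbF. Qed.

Lemma below_refl H v : vert H v -> below H v v.
Proof. by case: v => V [] /=; rewrite /below /vert /= => ->; rewrite ?eqxx ?subxx. Qed.

Lemma edge_below H u v : edge H u v -> below H u v.
Proof. by case/andP => /andP[]. Qed.

Lemma edge_ff H C D : edge H (C,false) (D,false) ->
  [/\ C \in H, D \in H, C \subset D, C != D &
   forall W, W \in H -> C \subset W -> W \subset D -> W = C \/ W = D].
Proof.
case/andP => /andP[]; rewrite below_ff => /and3P[CH DH CD] ne /forallP h.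
split => //; first by apply: contra ne => /eqP ->.
move=> W WH CW WD; have := h (W,false); rewrite !below_ff CH DH WH CW WD /=.
by rewrite !xpair_eqE !andbT => /orP[]/eqP ->; [left|right].
Qed.

Lemma edge_ft H C R : edge H (C,false) (R,true) -> C = R /\ R \in trees H.
Proof.
case/andP => /andP[]; rewrite below_ft => /and3P[CH RT CR] ne /forallP h.
split => //; have := h (R,false).
have RH : R \in H by apply: (subsetP (trees_sub H)).
rewrite below_ff below_ft CH RH RT CR subxx /= !xpair_eqE andbT andbF orbF.
by move=> /eqP.
Qed.

Lemma edge_t H R v : ~ edge H (R,true) v.
Proof. by case/andP => /andP[/below_t -> ]; rewrite eqxx. Qed.

Lemma edge_child H C A B : is_forest H -> C \in H -> children H C A B -> edge H (A,false) (C,false).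
Proof.
move=> Hf CH [[AH BH AC BC] [dAB uAB mAB]].
rewrite /edge below_ff AH CH (proper_sub AC) /= xpair_eqE andbT.
apply/andP; split; first by apply: contraT => /negbNE /eqP e; move: AC; rewrite e properxx.
apply/forallP => -[W b]; apply/implyP => /andP[h1 h2].
have b0 := below_xf h2; simpl in b0; subst b.
move: h1 h2; rewrite !below_ff => /and3P[_ WH AW] /and3P[_ _ WC].
rewrite !xpair_eqE !andbT.
case: (W =P C) => [->|neWC]; first by apply/orP; right.
have pWC : W \proper C by rewrite properEneq WC andbT; apply/eqP.
case: (mAB W WH pWC) => WX; first by apply/orP; left; rewrite eqEsubset WX AW.
have A0 := forest_ne Hf AH; case/set0Pn: A0 => x xA.
have xB := subsetP WX x (subsetP AW x xA).
by move: dAB; rewrite -setI_eq0 => /eqP/setP/(_ x); rewrite !inE xA xB.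
Qed.

Lemma edge_root H R : R \in trees H -> edge H (R,false) (R,true).
Proof.
move=> RT; have RH : R \in H by apply: (subsetP (trees_sub H)).
rewrite /edge below_ft RH RT subxx /= xpair_eqE /= andbF /=.
apply/forallP => -[W b]; apply/implyP => /andP[h1 h2].
case: b h1 h2 => h1 h2.
  by case: (below_t h2) => ->; apply/orP; right.
by move: h1 h2; rewrite below_ff below_ft => /and3P[_ _ RW] /and3P[_ _ WR];
  apply/orP; left; rewrite xpair_eqE andbT eqEsubset RW WR.
Qed.

Lemma children_neq H C A B : is_forest H -> children H C A B -> A != B.
Proof.
move=> Hf [[AH _ _ _] [dAB _ _]]; apply/eqP => e; subst B.
have := forest_ne Hf AH; case/set0Pn => x xA.
by move: dAB; rewrite -setI_eq0 => /eqP/setP/(_ x); rewrite !inE xA.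
Qed.

Lemma meet_img (phi : vtx I -> vtx I) x a b c : a != b ->
  x \in phi @: ([set a; c] :&: [set b; c]) -> x = phi c.
Proof.
move=> ab /imsetP[z]; rewrite !inE => /andP[h1 h2] ->.
case/orP: h2 => /eqP h2; last by rewrite h2.
case/orP: h1 => /eqP h1; last by rewrite h1.
by rewrite -h1 h2 eqxx in ab.
Qed.

Lemma in_tree_f H R C : C \in H -> R \in trees H -> C \subset R -> in_tree H R (C,false).
Proof. by move=> CH RT CR; rewrite /in_tree /vert /= CH below_ft CH RT CR. Qed.

Definition adm G P := forall L1 L2 i j k l, L1 \in P -> L2 \in P -> L1 != L2 ->
  i \in L1 -> j \in L1 -> k \in L2 -> l \in L2 -> i != j -> k != l ->
  mG G [set i; j] != mG G [set k; l].

End Edges.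


Section L3.
Variables (I : finType) (F G : {set {set I}}) (phi : vtx I -> vtx I).
Hypotheses (Ff : is_forest F) (Gf : is_forest G)
 (Hv : forall v, vert F v -> vert G (phi v))
 (Hmono : forall u v, edge F u v -> below G (phi u) (phi v))
 (Hin : forall v, inner F v -> inner G (phi v))
 (Hinj : forall u v, inner F u -> inner F v -> phi u = phi v -> u = v)
 (Hleaf : forall i : I, phi ([set i], false) = ([set i], false))
 (HD4 : forall R, R \in trees F ->
        [/\ (forall u v, in_tree F R u -> in_tree F R v -> phi u = phi v -> u = v),
            (forall w u v, in_tree F R w -> in_tree F R u -> edge F u v ->
               w != u -> w != v -> phi w \notin pathv G (phi u) (phi v)) &
            (forall u1 v1 u2 v2, in_tree F R u1 -> in_tree F R u2 ->
               edge F u1 v1 -> edge F u2 v2 -> (u1, v1) != (u2, v2) ->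
               pathv G (phi u1) (phi v1) :&: pathv G (phi u2) (phi v2)
                 \subset phi @: ([set u1; v1] :&: [set u2; v2]))]).

Lemma phiC C : C \in F -> phi (C,false) = (mG G C, false).
Proof.
move=> CF; move: {2}#|C| (leqnn #|C|) => n; elim: n C CF => [|n IH] C CF Cn.
  by move: Cn; rewrite leqn0 cards_eq0 (negbTE (forest_ne Ff CF)).
have C0 := forest_ne Ff CF.
case: (leqP #|C| 1) => C1.
  have : #|C| == 1 by rewrite eqn_leq C1 card_gt0.
  case/cards1P => i ->; rewrite Hleaf mG1 //.
  by case: Gf.
case: (children_ex Ff CF C1) => A [B ch].
have [[AF BF AC BC] [dAB uAB mAB]] := ch.
have IHA : phi (A,false) = (mG G A, false).
  by apply: IH => //; rewrite -ltnS (leq_trans (proper_card AC)).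
have IHB : phi (B,false) = (mG G B, false).
  by apply: IH => //; rewrite -ltnS (leq_trans (proper_card BC)).
case: (in_trees CF) => R RT CR.
have inA := in_tree_f AF RT (subset_trans (proper_sub AC) CR).
have inB := in_tree_f BF RT (subset_trans (proper_sub BC) CR).
have eA := edge_child Ff CF ch.
have eB := edge_child Ff CF (childrenC ch).
have iC : inner F (C,false) by rewrite /inner /vert /= CF C1.
have := Hin iC; case E: (phi (C,false)) => [D b]; rewrite /inner /vert /=.
case: b E => E; first by rewrite andbF.
case/andP => /andP[DG _] _.
have := Hmono eA; rewrite IHA E below_ff => /and3P[vA _ mAD].
have := Hmono eB; rewrite IHB E below_ff => /and3P[vB _ mBD].
have CD : C \subset D.
  by rewrite -uAB subUset (subset_trans (sub_mG G A) mAD) (subset_trans (sub_mG G B) mBD).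
have MG := mG_in Gf C0 DG CD.
have [_ _ h3] := HD4 RT.
have neq : ((A,false),(C,false)) != ((B,false),(C,false)).
  by rewrite !xpair_eqE !eqxx !andbT (children_neq Ff ch).
have := h3 _ _ _ _ inA inB eA eB neq.
rewrite IHA IHB E => /subsetP /(_ (mG G C, false)).
rewrite !inE !below_ff vA vB MG DG (mG_min DG CD) (mG_mono G (proper_sub AC))
  (mG_mono G (proper_sub BC)) /= => /(_ isT) hx.
have nAB : (A,false) != (B,false) by rewrite xpair_eqE andbT (children_neq Ff ch).
have := meet_img nAB hx.
by rewrite E => ->.
Qed.

Lemma vertG C : C \in F -> mG G C \in G.
Proof. by move=> CF; have := @Hv (C,false) CF; rewrite phiC. Qed.

Lemma child_nsub C A B : C \in F -> children F C A B -> ~ (mG G A \subset mG G B).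
Proof.
move=> CF ch AB; have [[AF BF AC BC] _] := ch.
case: (in_trees CF) => R RT CR.
have inA := in_tree_f AF RT (subset_trans (proper_sub AC) CR).
have inB := in_tree_f BF RT (subset_trans (proper_sub BC) CR).
have inC := in_tree_f CF RT CR.
have eA := edge_child Ff CF ch.
have eB := edge_child Ff CF (childrenC ch).
have [h1 _ h3] := HD4 RT.
have neq : ((A,false),(C,false)) != ((B,false),(C,false)).
  by rewrite !xpair_eqE !eqxx !andbT (children_neq Ff ch).
have := h3 _ _ _ _ inA inB eA eB neq.
rewrite (phiC AF) (phiC BF) (phiC CF) => /subsetP /(_ (mG G B, false)).
rewrite !inE !below_ff (vertG AF) (vertG BF) (vertG CF) AB subxx
  (mG_mono G (proper_sub BC)) /= => /(_ isT) hx.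
have nAB : (A,false) != (B,false) by rewrite xpair_eqE andbT (children_neq Ff ch).
have := meet_img nAB hx.
rewrite -(phiC BF) => e0.
have := h1 _ _ inB inC e0; case => eBC.
by move: BC; rewrite eBC properxx.
Qed.

Lemma child_disj C A B x : C \in F -> children F C A B ->
  x \in mG G A -> x \in mG G B -> False.
Proof.
move=> CF ch xA xB; have [[AF BF _ _] _] := ch.
have : mG G A :&: mG G B != set0 by apply: (@nonempty_of _ _ x); rewrite inE xA xB.
case/(forest_lam Gf (vertG AF) (vertG BF)) => h.
  exact: child_nsub CF ch h.
exact: child_nsub CF (childrenC ch) h.
Qed.

Lemma phi_restr C R : C \in F -> R \in trees F -> C \subset R -> C = mG G C :&: R.
Proof.
move=> CF RT CR; apply/eqP; rewrite eqEsubset subsetI sub_mG CR /=.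
apply/subsetP => i; rewrite inE => /andP[iM iR]; apply: contraT => iC.
have RF : R \in F by apply: (subsetP (trees_sub F)).
set S := C :|: [set i].
have SR : S \subset R by rewrite subUset CR sub1set iR.
have S0 : S != set0 by apply: (@nonempty_of _ _ i); rewrite !inE eqxx orbT.
have C2F := mG_in Ff S0 RF SR.
have SC2 := sub_mG F S.
have CC2 : C \subset mG F S by apply: subset_trans SC2; rewrite subsetUl.
have iC2 : i \in mG F S by apply: (subsetP SC2); rewrite !inE eqxx orbT.
have pC : C \proper mG F S.
  by rewrite properEneq CC2 andbT; apply: contraNneq iC => ->.
have C2 : 1 < #|mG F S|.
  by apply: leq_ltn_trans (proper_card pC); rewrite card_gt0 (forest_ne Ff CF).
case: (children_ex Ff C2F C2) => A [B ch].
wlog CA : A B ch / C \subset A.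
  move=> hw; have [_ [_ _ m]] := ch; case: (m C CF pC) => h.
    exact: hw ch h.
  exact: hw _ _ (childrenC ch) h.
have [[AF BF AC2 BC2] [dAB uAB _]] := ch.
have iA : i \notin A.
  apply/negP => iA; have : S \subset A by rewrite subUset CA sub1set iA.
  move/(mG_min AF) => C2A.
  by move: (proper_sub_trans AC2 C2A); rewrite properxx.
have iB : i \in B by move: iC2; rewrite -uAB inE (negbTE iA).
by case: (child_disj C2F ch (subsetP (mG_mono G CA) i iM) (subsetP (sub_mG G B) i iB)).
Qed.

Lemma restr_in_F D R : D \in G -> R \in trees F -> D :&: R != set0 -> D :&: R \in F.
Proof.
move=> DG RT n0.
have RF : R \in F by apply: (subsetP (trees_sub F)).
set S := D :&: R.
have CF := mG_in Ff n0 RF (subsetIr D R).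
have SC := sub_mG F S.
have CR := mG_min RF (subsetIr D R).
case: (mG F S =P S) => [<- //|ne].
have pS : S \proper mG F S by rewrite properEneq SC andbT eq_sym; apply/eqP.
have C2 : 1 < #|mG F S|.
  by apply: leq_ltn_trans (proper_card pS); rewrite card_gt0.
case: (children_ex Ff CF C2) => A [B ch].
have key : forall X Y x y, children F (mG F S) X Y -> x \in S -> x \in X ->
    y \in S -> y \in Y -> mG G X \subset D.
  move=> X Y x y chXY xS xX yS yY; have [[XF YF _ _] _] := chXY.
  have xD : x \in D by move: xS; rewrite inE => /andP[].
  have yD : y \in D by move: yS; rewrite inE => /andP[].
  have xmX : x \in mG G X by apply: (subsetP (sub_mG G X)).
  have : D :&: mG G X != set0 by apply: (@nonempty_of _ _ x); rewrite inE xD xmX.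
  case/(forest_lam Gf DG (vertG XF)) => // DX.
  exfalso; apply: (child_disj CF chXY (x:=y)); first exact: (subsetP DX).
  exact: (subsetP (sub_mG G Y)).
have [[AF BF AC BC] [dAB uAB _]] := ch.
have nSA : ~~ (S \subset A).
  apply/negP => SA; move: (mG_min AF SA) => CA.
  by move: (proper_sub_trans AC CA); rewrite properxx.
have nSB : ~~ (S \subset B).
  apply/negP => SB; move: (mG_min BF SB) => CB.
  by move: (proper_sub_trans BC CB); rewrite properxx.
case/subsetPn: nSA => a aS aA.
case/subsetPn: nSB => b bS bB.
have aB : a \in B by move: (subsetP SC a aS); rewrite -uAB inE (negbTE aA).
have bA : b \in A by move: (subsetP SC b bS); rewrite -uAB inE (negbTE bB) orbF.
have AD := key _ _ _ _ ch bS bA aS aB.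
have BD := key _ _ _ _ (childrenC ch) aS aB bS bA.
have CD : mG F S \subset D.
  by rewrite -uAB subUset (subset_trans (sub_mG G A) AD) (subset_trans (sub_mG G B) BD).
have : mG F S \subset S by rewrite subsetI CD CR.
by move=> h; move: (proper_sub_trans pS h); rewrite properxx.
Qed.

Lemma mGF_pair S L : S != set0 -> L \in trees F -> S \subset L -> mG G (mG F S) = mG G S.
Proof.
move=> S0 LT SL.
have LF : L \in F by apply: (subsetP (trees_sub F)).
have C1F := mG_in Ff S0 LF SL.
have vC := vertG C1F.
have SC := sub_mG F S.
have mSG := mG_in Gf S0 vC (subset_trans SC (sub_mG G _)).
apply/eqP; rewrite eqEsubset (mG_mono G SC) andbT.
apply: mG_min => //.
have n0 : mG G S :&: L != set0.
  case/set0Pn: S0 => x xS; apply: (@nonempty_of _ _ x).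
  by rewrite inE (subsetP (sub_mG G S)) ?(subsetP SL).
have := restr_in_F mSG LT n0 => h.
have h2 : mG F S \subset mG G S :&: L by apply: mG_min h _; rewrite subsetI sub_mG SL.
by apply: subset_trans h2 (subsetIl _ _).
Qed.

Lemma forLe_char0 : [/\ F = restr G (trees F), adm G (trees F) & refines (trees F) (trees G)].
Proof.
split.
- apply/setP => X; apply/idP/idP => [XF|].
    case: (in_trees XF) => R RT XR.
    apply/restrP; exists (mG G X), R; split => //; first exact: vertG.
      exact: phi_restr.
    exact: forest_ne Ff XF.
  by case/restrP => D [R [DG RT -> n0]]; apply: restr_in_F.
- move=> L1 L2 i j k l L1T L2T ne iL jL kL lL ij kl; apply/eqP => e.
  have L1F : L1 \in F by apply: (subsetP (trees_sub F)).
  have L2F : L2 \in F by apply: (subsetP (trees_sub F)).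
  have S1 : [set i; j] != set0 by apply: (@nonempty_of _ _ i); rewrite !inE eqxx.
  have S2 : [set k; l] != set0 by apply: (@nonempty_of _ _ k); rewrite !inE eqxx.
  have SL1 : [set i; j] \subset L1 by apply/subsetP => x; rewrite !inE => /orP[]/eqP->.
  have SL2 : [set k; l] \subset L2 by apply/subsetP => x; rewrite !inE => /orP[]/eqP->.
  have C1F := mG_in Ff S1 L1F SL1.
  have C2F := mG_in Ff S2 L2F SL2.
  have inner1 : inner F (mG F [set i; j], false).
    rewrite /inner /vert /= C1F /=; apply: leq_trans (subset_leq_card (sub_mG F _)).
    by rewrite cards2 ij.
  have inner2 : inner F (mG F [set k; l], false).
    rewrite /inner /vert /= C2F /=; apply: leq_trans (subset_leq_card (sub_mG F _)).
    by rewrite cards2 kl.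
  have := Hinj inner1 inner2.
  rewrite (phiC C1F) (phiC C2F) (mGF_pair S1 L1T SL1) (mGF_pair S2 L2T SL2) e.
  case/(_ erefl) => eC.
  have iC1 : i \in mG F [set i; j] by apply: (subsetP (sub_mG F _)); rewrite !inE eqxx.
  have iL2 : i \in L2 by rewrite eC in iC1; apply: (subsetP (mG_min L2F SL2)).
  by rewrite (trees_eq Ff L1T L2T iL iL2) eqxx in ne.
- move=> R RT; have RF : R \in F by apply: (subsetP (trees_sub F)).
  case: (in_trees (vertG RF)) => R' R'T h; exists R' => //.
  exact: subset_trans (sub_mG G R) h.
Qed.

End L3.

Lemma forLe_char (I : finType) (F G : {set {set I}}) : forLe F G ->
  [/\ F = restr G (trees F), adm G (trees F) & refines (trees F) (trees G)].
Proof.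
case=> Ff [Gf [phi [Hv [Hmono [Hin [Hinj [Hleaf HD4]]]]]]].
exact: (forLe_char0 Ff Gf Hv Hmono Hin Hinj Hleaf HD4).
Qed.


Definition phiR (I : finType) (G : {set {set I}}) (v : vtx I) : vtx I :=
  if v.2 then (tG G v.1, true) else (mG G v.1, false).

Section R7.
Variables (I : finType) (G P : {set {set I}}).
Hypotheses (Gf : is_forest G) (Pp : partition P [set: I]) (Pfit : fits G P) (Padm : adm G P).
Let F := restr G P.
Let phi := phiR G.

Lemma Ff : is_forest F. Proof. exact: restr_forest Gf Pp. Qed.
Lemma TR : trees F = P. Proof. exact: restr_trees Pp Pfit. Qed.

Lemma tGP R : R \in P -> tG G R \in trees G /\ R \subset tG G R.
Proof. by move=> RP; case: (Pfit RP) => D DG RD; apply: tG_spec DG RD. Qed.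

Lemma tGG R : R \in P -> tG G R \in G.
Proof. by move=> /tGP[h _]; apply: (subsetP (trees_sub G)). Qed.

Lemma P0 R : R \in P -> R != set0.
Proof. by move=> RP; case/partP: Pp => _ _ n0; apply: contraNneq n0 => <-. Qed.

Lemma vertP v : vert F v -> vert G (phi v).
Proof.
case: v => C [] /=; rewrite /vert /phi /phiR /=.
  by rewrite TR => /tGP[].
exact: restr_mG_in.
Qed.

Lemma monoP u v : below F u v -> below G (phi u) (phi v).
Proof.
case: u v => C [] [D []] h.
- by move: (below_t h) => [->]; apply: below_refl; apply: vertP; case/andP: h => /andP[].
- by have := below_xf h.
- rewrite /phi /phiR /=; move: h; rewrite below_ft below_ft TR => /and3P[CF DP CD].
  rewrite (restr_mG_in (P:=P) Gf CF) (proj1 (tGP DP)) /=.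
  apply: mG_min (tGG DP) _; exact: subset_trans CD (proj2 (tGP DP)).
- rewrite /phi /phiR /=; move: h; rewrite !below_ff => /and3P[CF DF CD].
  by rewrite (restr_mG_in (P:=P) Gf CF) (restr_mG_in Gf DF) mG_mono.
Qed.

Lemma innerP v : inner F v -> inner G (phi v).
Proof.
case: v => C []; rewrite /inner /vert /phi /phiR /=; first by rewrite andbF.
rewrite andbT => /andP[CF C2].
rewrite (restr_mG_in (P:=P) Gf CF) /=; apply: leq_trans C2 _.
exact: subset_leq_card (sub_mG G C).
Qed.

Lemma sub_blk C : C \in F -> exists2 D, D \in G & C \subset D.
Proof. move=> CF; exists (mG G C); last exact: sub_mG. exact: (restr_mG_in (P:=P) Gf CF). Qed.

Lemma injP u v : inner F u -> inner F v -> phi u = phi v -> u = v.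
Proof.
case: u => C1 []; first by rewrite /inner andbF.
case: v => C2 []; first by rewrite /inner andbF.
rewrite /inner /vert /phi /phiR /= ?andbT => /andP[C1F C12] /andP[C2F C22] [e].
case: (restr_block C1F) => L1 L1P C1L.
case: (restr_block C2F) => L2 L2P C2L.
case: (L1 =P L2) => [eL|neL].
  subst L2; rewrite (restr_blockE Pp C1F L1P C1L) (restr_blockE Pp C2F L1P C2L) e //.
case: (sub_blk C1F) => D1 D1G C1D.
case: (sub_blk C2F) => D2 D2G C2D.
case: (mG_pair Gf C12 D1G C1D) => i [j [iC jC ij ei]].
case: (mG_pair Gf C22 D2G C2D) => k [l [kC lC kl ek]].
have := Padm L1P L2P (introN eqP neL) (subsetP C1L i iC) (subsetP C1L j jC)
  (subsetP C2L k kC) (subsetP C2L l lC) ij kl.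
by rewrite ei ek e eqxx.
Qed.

Lemma leafP i : phi ([set i], false) = ([set i], false).
Proof. by rewrite /phi /phiR /= mG1 //; case: Gf. Qed.

Lemma in_treeP R u : in_tree F R u ->
  (exists C, [/\ u = (C,false), C \in F & C \subset R]) \/ u = (R,true).
Proof.
case: u => C [] /andP[_ h].
  by right; case: (below_t h) => ->.
by left; exists C; move: h; rewrite below_ft => /and3P[].
Qed.

Lemma blkE R C : R \in P -> C \in F -> C \subset R -> C = mG G C :&: R.
Proof. by move=> RP CF CR; exact: (restr_blockE (G:=G) Pp CF RP CR). Qed.

Lemma edge_class R u v : R \in P -> in_tree F R u -> edge F u v ->
  (u = (R,false) /\ v = (R,true)) \/
  (exists C D, [/\ u = (C,false), v = (D,false), C \in F, D \in F &
     [/\ C \subset R, D \subset R, C != D, C \subset D &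
      forall W, W \in F -> C \subset W -> W \subset D -> W = C \/ W = D]]).
Proof.
move=> RP ut e; case: (in_treeP ut) => [[C [eu CF CR]]|eu]; last first.
  by subst u; case: (edge_t e).
subst u; case: v e => D [] e.
  left; case: (edge_ft e) => eCD DT; subst D.
  rewrite TR in DT.
  by rewrite (part_same Pp RP DT (forest_ne Ff CF) CR (subxx C)).
right; exists C, D; case: (edge_ff e) => _ DF CD ne m; split => //; split => //.
apply: (restr_inter Pp DF RP).
case/set0Pn: (forest_ne Ff CF) => x xC; apply: (@nonempty_of _ _ x).
by rewrite inE (subsetP CD) ?(subsetP CR).
Qed.


Lemma pathvE (H : {set {set I}}) a b x : (x \in pathv H a b) = below H a x && below H x b.
Proof. by rewrite inE. Qed.

Lemma phif C : phi (C,false) = (mG G C, false). Proof. by []. Qed.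
Lemma phit C : phi (C,true) = (tG G C, true). Proof. by []. Qed.

Lemma PF R : R \in P -> R \in F.
Proof. by rewrite -TR => RT; apply: (subsetP (trees_sub F)). Qed.

Lemma D4_1 R u v : R \in P -> in_tree F R u -> in_tree F R v -> phi u = phi v -> u = v.
Proof.
move=> RP ut vt.
case: (in_treeP ut) => [[C1 [-> C1F C1R]]| ->];
case: (in_treeP vt) => [[C2 [-> C2F C2R]]| ->] //; rewrite ?phif ?phit //.
case=> e; rewrite (blkE RP C1F C1R) (blkE RP C2F C2R) e //.
Qed.

Lemma D4_2 R w u v : R \in P -> in_tree F R w -> in_tree F R u -> edge F u v ->
  w != u -> w != v -> phi w \notin pathv G (phi u) (phi v).
Proof.
move=> RP wt ut e nwu nwv.
case: (edge_class RP ut e) => [[eu ev]|[C [D [eu ev CF DF [CR DR nCD CD m]]]]];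
  subst u v.
  case: (in_treeP wt) => [[W [ew WF WR]]| ew]; subst w; last by rewrite eqxx in nwv.
  rewrite phif phif phit pathvE below_ff; apply/negP => /andP[/and3P[_ _ h] _].
  have RW : R \subset W.
    by rewrite (blkE RP (PF RP) (subxx R)) (blkE RP WF WR) setSI.
  by move: nwu; rewrite (_ : W = R) ?eqxx //; apply/eqP; rewrite eqEsubset WR RW.
case: (in_treeP wt) => [[W [ew WF WR]]| ew]; subst w; last first.
  rewrite phit; apply/negP; rewrite pathvE => /andP[_ h].
  by have := below_xf h.
rewrite !phif pathvE !below_ff; apply/negP => /andP[/and3P[_ _ h1] /and3P[_ _ h2]].
have CW : C \subset W by rewrite (blkE RP CF CR) (blkE RP WF WR) setSI.
have WD : W \subset D by rewrite (blkE RP WF WR) (blkE RP DF DR) setSI.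
by case: (m W WF CW WD) => ew; subst W; rewrite eqxx in nwu nwv.
Qed.

Lemma pathv_f C D x : x \in pathv G (phi (C,false)) (phi (D,false)) ->
  exists X, [/\ x = (X,false), X \in G, mG G C \subset X & X \subset mG G D].
Proof.
rewrite pathvE => /andP[h1 h2]; case: x h1 h2 => X b h1 h2.
have b0 := below_xf h2; simpl in b0; subst b.
move: h1 h2; rewrite !phif !below_ff => /and3P[_ XG h1] /and3P[_ _ h2].
by exists X.
Qed.

Lemma mixed C D R x : R \in P -> C \in F -> D \in F -> C \subset R -> D \subset R ->
  x \in pathv G (phi (C,false)) (phi (D,false)) ->
  x \in pathv G (phi (R,false)) (phi (R,true)) -> x = phi (D,false) /\ D = R.
Proof.
move=> RP CF DF CR DR /pathv_f[X [-> XG h1 h2]].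
rewrite pathvE phif below_ff => /andP[/and3P[_ _ h3] _].
have eX : X = mG G D.
  apply/eqP; rewrite eqEsubset h2 /=; apply: subset_trans h3; exact: mG_mono.
split; first by rewrite eX.
have eR : mG G D = mG G R.
  apply/eqP; rewrite eqEsubset mG_mono //= -eX //.
by rewrite (blkE RP DF DR) eR -(blkE RP (PF RP) (subxx R)).
Qed.

Lemma parent_uniq C D1 D2 : C \in F -> D1 \in F -> D2 \in F ->
  C \subset D1 -> C \subset D2 -> C != D1 -> C != D2 ->
  (forall W, W \in F -> C \subset W -> W \subset D1 -> W = C \/ W = D1) ->
  (forall W, W \in F -> C \subset W -> W \subset D2 -> W = C \/ W = D2) -> D1 = D2.
Proof.
move=> CF D1F D2F CD1 CD2 n1 n2 m1 m2.
have : D1 :&: D2 != set0.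
  case/set0Pn: (forest_ne Ff CF) => x xC; apply: (@nonempty_of _ _ x).
  by rewrite inE (subsetP CD1) ?(subsetP CD2).
case/(forest_lam Ff D1F D2F) => h.
  by case: (m2 D1 D1F CD1 h) => // e; rewrite e eqxx in n1.
by case: (m1 D2 D2F CD2 h) => // e; rewrite e eqxx in n2.
Qed.

Lemma D4_3 R u1 v1 u2 v2 : R \in P -> in_tree F R u1 -> in_tree F R u2 ->
  edge F u1 v1 -> edge F u2 v2 -> (u1, v1) != (u2, v2) ->
  pathv G (phi u1) (phi v1) :&: pathv G (phi u2) (phi v2)
    \subset phi @: ([set u1; v1] :&: [set u2; v2]).
Proof.
move=> RP u1t u2t e1 e2 ne; apply/subsetP => x; rewrite inE => /andP[x1 x2].
case: (edge_class RP u1t e1) => [[eu1 ev1]|[C1 [D1 [eu1 ev1 C1F D1F [C1R D1R n1 CD1 m1]]]]];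
case: (edge_class RP u2t e2) => [[eu2 ev2]|[C2 [D2 [eu2 ev2 C2F D2F [C2R D2R n2 CD2 m2]]]]];
  subst u1 v1 u2 v2.
- by rewrite eqxx in ne.
- case: (mixed RP C2F D2F C2R D2R x2 x1) => -> eD; subst D2.
  by apply/imsetP; exists (R,false) => //; rewrite !inE !eqxx ?orbT.
- case: (mixed RP C1F D1F C1R D1R x1 x2) => -> eD; subst D1.
  by apply/imsetP; exists (R,false) => //; rewrite !inE !eqxx ?orbT.
case/pathv_f: x1 => X [ex XG h1 h2]; subst x.
case/pathv_f: x2 => X' [[eX] _ h3 h4]; subst X'.
have C10 := forest_ne Ff C1F.
have C1Y : C1 \subset X :&: R by rewrite subsetI C1R (subset_trans (sub_mG G C1) h1).
have C2Y : C2 \subset X :&: R by rewrite subsetI C2R (subset_trans (sub_mG G C2) h3).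
have YF : X :&: R \in F.
  apply: restr_in XG RP _; case/set0Pn: C10 => c cC.
  exact: (nonempty_of (subsetP C1Y c cC)).
have YD1 : X :&: R \subset D1 by rewrite (blkE RP D1F D1R) setSI.
have YD2 : X :&: R \subset D2 by rewrite (blkE RP D2F D2R) setSI.
case: (m1 _ YF C1Y YD1) => eY1; case: (m2 _ YF C2Y YD2) => eY2.
- have e : C2 = C1 by rewrite -eY1 -eY2.
  rewrite {}e in CD2 n2 m2 ne.
  have eD := parent_uniq C1F D1F D2F CD1 CD2 n1 n2 m1 m2.
  by rewrite eD eqxx in ne.
- have e : D2 = C1 by rewrite -eY1 -eY2.
  rewrite {}e in h4 *; apply/imsetP; exists (C1,false); first by rewrite !inE !eqxx ?orbT.
  by rewrite phif (_ : X = mG G C1) //; apply/eqP; rewrite eqEsubset h4 h1.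
- have e : C2 = D1 by rewrite -eY1 -eY2.
  rewrite {}e in h3 *; apply/imsetP; exists (D1,false); first by rewrite !inE !eqxx ?orbT.
  by rewrite phif (_ : X = mG G D1) //; apply/eqP; rewrite eqEsubset h2 h3.
- have e : D2 = D1 by rewrite -eY1 -eY2.
  rewrite {}e; apply/imsetP; exists (D1,false); first by rewrite !inE !eqxx ?orbT.
  have D1X : D1 \subset X by rewrite -eY1 subsetIl.
  by rewrite phif (_ : X = mG G D1) //; apply/eqP; rewrite eqEsubset h2 (mG_min XG D1X).
Qed.

Lemma restr_forLe : forLe F G.
Proof.
split; first exact: Ff.
split; first exact: Gf.
exists phi; split; first exact: vertP.
split; first by move=> u v e; apply: monoP; apply: edge_below e.
split; first exact: innerP.
split; first exact: injP.
split; first exact: leafP.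
move=> R; rewrite TR => RP; split.
- by move=> u v; apply: D4_1 RP.
- by move=> w u v; apply: D4_2 RP.
- by move=> u1 v1 u2 v2; apply: D4_3 RP.
Qed.

End R7.


Section Final.
Variable I : finType.
Implicit Types (G F H T P Q : {set {set I}}) (S C D X L R W : {set I}).

Lemma meetE T i j C : is_forest T -> [set: I] \in T ->
  is_meet T i j C = (C == mG T [set i; j]).
Proof.
move=> Tf TT; apply/idP/eqP.
  case/and4P => CT iC jC /forall_inP h; apply: esym; apply: mG_unique => //.
    by apply/subsetP => x; rewrite !inE => /orP[]/eqP->.
  move=> D DT ijD; apply: (implyP (h D DT)).
  by rewrite (subsetP ijD) ?(subsetP ijD) // !inE eqxx ?orbT.
move=> ->.
have n0 : [set i; j] != set0 by apply: (@nonempty_of _ _ i); rewrite !inE eqxx.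
apply/and4P; split.
- exact: mG_in Tf n0 TT (subsetT _).
- by apply: (subsetP (sub_mG T _)); rewrite !inE eqxx.
- by apply: (subsetP (sub_mG T _)); rewrite !inE eqxx orbT.
- apply/forall_inP => D DT; apply/implyP => /andP[iD jD]; apply: mG_min => //.
  by apply/subsetP => x; rewrite !inE => /orP[]/eqP->.
Qed.

Lemma admE T P : is_forest T -> [set: I] \in T ->
  admissible T P <-> partition P [set: I] /\ adm T P.
Proof.
move=> Tf TT; split.
  case=> Pp h; split => // L1 L2 i j k l L1P L2P ne iL jL kL lL ij kl.
  apply/eqP => e.
  have C1 : mG T [set i; j] \in Sset T L1.
    rewrite inE; apply/exists_inP; exists i => //; apply/exists_inP; exists j => //.
    by rewrite ij (meetE _ _ _ Tf TT); apply/eqP.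
  have C2 : mG T [set i; j] \in Sset T L2.
    rewrite inE; apply/exists_inP; exists k => //; apply/exists_inP; exists l => //.
    by rewrite kl (meetE _ _ _ Tf TT) e; apply/eqP.
  have := h L1 L2 L1P L2P ne => /setP/(_ (mG T [set i; j])).
  by rewrite inE C1 C2 inE.
case=> Pp a; split => // A B AP BP ne.
apply/setP => C; rewrite !inE; apply/negP.
case/andP => /exists_inP[i iA /exists_inP[j jA /andP[ij mij]]]
  /exists_inP[k kB /exists_inP[l lB /andP[kl mkl]]].
rewrite (meetE _ _ _ Tf TT) in mij; rewrite (meetE _ _ _ Tf TT) in mkl.
have := a A B i j k l AP BP ne iA jA kB lB ij kl.
by rewrite -(eqP mij) -(eqP mkl) eqxx.
Qed.

Lemma zero_part : partition (zero_forest I) [set: I].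
Proof.
apply/partP; split.
- by move=> i; exists [set i]; [apply: imset_f | rewrite inE].
- move=> L1 L2 i /imsetP[a _ ->] /imsetP[b _ ->]; rewrite !inE => /eqP-> /eqP->.
  done.
- apply/negP => /imsetP[a _ e].
  have : a \in (set0 : {set I}) by rewrite e inE.
  by rewrite inE.
Qed.

Lemma zero_fits H : is_forest H -> fits H (zero_forest I).
Proof. by case=> h _ _ _ L /imsetP[a _ ->]; exists [set a]. Qed.

Lemma zero_adm H : adm H (zero_forest I).
Proof.
move=> L1 L2 i j k l /imsetP[a _ ->] _ _; rewrite !inE => /eqP-> /eqP->.
by rewrite eqxx.
Qed.

Lemma zero_restr H : is_forest H -> restr H (zero_forest I) = zero_forest I.
Proof.
move=> Hf; apply/setP => X; apply/idP/idP.
  case/restrP => D [L [DH /imsetP[a _ ->] eX n0]].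
  have XS : X \subset [set a] by rewrite eX subsetIr.
  case/set0Pn: n0 => x xX.
  have xa : x = a by move: (subsetP XS x xX); rewrite inE => /eqP.
  subst x.
  have -> : X = [set a] by apply/eqP; rewrite eqEsubset XS sub1set xX.
  exact: imset_f.
case/imsetP => a _ ->.
have -> : [set a] = [set a] :&: [set a] by rewrite setIid.
apply: restr_in; first by case: Hf.
  exact: imset_f.
by rewrite setIid; apply: (@nonempty_of _ _ a); rewrite inE.
Qed.

Lemma restr_restr T P Q : partition P [set: I] -> partition Q [set: I] ->
  refines P Q -> restr (restr T Q) P = restr T P.
Proof.
move=> Pp Qp PQ; apply/setP => X; apply/idP/idP.
  case/restrP => E [L [/restrP[D [L' [DT L'Q eE nE]]] LP eX n0]].
  case: (PQ L LP) => L'' L''Q LL''.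
  have XL' : X \subset L' by rewrite eX eE -setIA subIset // subsetIl orbT.
  have XL : X \subset L by rewrite eX subsetIr.
  have eL := part_same Qp L'Q L''Q n0 XL' (subset_trans XL LL''); subst L''.
  apply/restrP; exists D, L; split => //.
  by rewrite eX eE -setIA (setIidPr LL'').
case/restrP => D [L [DT LP eX n0]].
case: (PQ L LP) => L' L'Q LL'.
apply/restrP; exists (D :&: L'), L; split => //.
  apply: restr_in => //; apply: contraNneq n0 => h.
  by apply/eqP; rewrite eX -(setIidPr LL') setIA h set0I.
by rewrite -setIA (setIidPr LL').
Qed.

Lemma adm_restr T P Q : is_forest T -> [set: I] \in T ->
  partition P [set: I] -> partition Q [set: I] ->
  refines P Q -> adm T P -> adm (restr T Q) P.
Proof.
move=> Tf TT Pp Qp PQ a L1 L2 i j k l L1P L2P ne iL jL kL lL ij kl.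
have fitsT : fits T Q by move=> L _; exists [set: I] => //; apply: subsetT.
case: (PQ L1 L1P) => L1' L1'Q L11.
case: (PQ L2 L2P) => L2' L2'Q L22.
have S1 : [set i; j] != set0 by apply: (@nonempty_of _ _ i); rewrite !inE eqxx.
have S2 : [set k; l] != set0 by apply: (@nonempty_of _ _ k); rewrite !inE eqxx.
have SL1 : [set i; j] \subset L1' by apply/subsetP => x; rewrite !inE => /orP[]/eqP->;
  apply: (subsetP L11).
have SL2 : [set k; l] \subset L2' by apply/subsetP => x; rewrite !inE => /orP[]/eqP->;
  apply: (subsetP L22).
rewrite (restr_mG Tf Qp fitsT S1 L1'Q SL1) (restr_mG Tf Qp fitsT S2 L2'Q SL2).
apply/eqP => e.
have M1 := mG_in Tf S1 TT (subsetT _).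
have M2 := mG_in Tf S2 TT (subsetT _).
have iM1 : i \in mG T [set i; j] by apply: (subsetP (sub_mG T _)); rewrite !inE eqxx.
have iL1' : i \in L1' by apply: (subsetP L11).
have : i \in mG T [set k; l] :&: L2' by rewrite -e inE iM1 iL1'.
rewrite inE => /andP[iM2 iL2'].
have eL : L1' = L2'.
  by case/partP: Qp => _ h _; apply: h iL1' iL2'.
subst L2'.
have := a L1 L2 i j k l L1P L2P ne iL jL kL lL ij kl.
apply/negP/negPn.
have : mG T [set i; j] :&: mG T [set k; l] != set0.
  by apply: (@nonempty_of _ _ i); rewrite inE iM1 iM2.
have kl_in : forall x, x \in [set k; l] -> x \in mG T [set i; j].
  move=> x xS; have : x \in mG T [set k; l] :&: L1'.
    by rewrite inE (subsetP (sub_mG T _) x xS) (subsetP SL2 x xS).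
  by rewrite -e inE => /andP[].
have ij_in : forall x, x \in [set i; j] -> x \in mG T [set k; l].
  move=> x xS; have : x \in mG T [set i; j] :&: L1'.
    by rewrite inE (subsetP (sub_mG T _) x xS) (subsetP SL1 x xS).
  by rewrite e inE => /andP[].
have h1 : mG T [set k; l] \subset mG T [set i; j] by apply: mG_min => //; apply/subsetP.
have h2 : mG T [set i; j] \subset mG T [set k; l] by apply: mG_min => //; apply/subsetP.
by move=> _; rewrite eqEsubset h1 h2.
Qed.

End Final.

Unset Implicit Arguments.

Theorem proposition3p4 (I : finType) (T : {set {set I}}) :
  is_tree_on T ->
  [/\ (forall F, in_interval T F -> admissible T (Pi F)),
      (forall P, admissible T P -> exists F, in_interval T F /\ Pi F = P),
      (forall F G, in_interval T F -> in_interval T G -> Pi F = Pi G -> F = G) &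
      (forall F G, in_interval T F -> in_interval T G ->
         (forLe F G <-> refines (Pi F) (Pi G)))].
Proof.
case=> Tf TT.
have fitsT : forall P, fits T P by move=> P L _; exists [set: I] => //; apply: subsetT.
split.
- move=> F [_ FT]; have Ff : is_forest F by case: FT.
  case: (forLe_char FT) => _ aF _.
  by apply/(admE _ Tf TT); split => //; apply: trees_part.
- move=> P /(admE _ Tf TT) [Pp Pa].
  have Ff := restr_forest Tf Pp.
  exists (restr T P); split; last exact: restr_trees Pp (fitsT P).
  split; last exact: restr_forLe Tf Pp (fitsT P) Pa.
  rewrite -(zero_restr Ff).
  exact: (restr_forLe Ff (zero_part I) (zero_fits Ff) (@zero_adm I (restr T P))).
- move=> F G [_ FT] [_ GT] e.
  case: (forLe_char FT) => eF _ _; case: (forLe_char GT) => eG _ _.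
  by rewrite eF eG; rewrite /Pi in e; rewrite e.
- move=> F G [_ FT] [_ GT]; rewrite /Pi; split.
    by case/forLe_char.
  move=> PQ.
  have Ff : is_forest F by case: FT.
  have Gf : is_forest G by case: GT.
  case: (forLe_char FT) => eF aF _; case: (forLe_char GT) => eG _ _.
  have Pp := trees_part Ff; have Qp := trees_part Gf.
  have e1 := restr_restr T Pp Qp PQ.
  have a1 := adm_restr Tf TT Pp Qp PQ aF.
  rewrite -eG -eF in e1; rewrite -eG in a1.
  have fG : fits G (trees F).
    move=> L LP; case: (PQ L LP) => L' L'T LL'; exists L' => //.
    exact: (subsetP (trees_sub G)).
  rewrite -{1}e1; exact: restr_forLe Gf Pp fG a1.
Qed.
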